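(* Let $a,b,c,d>0$, $\theta>0$ satisfy $-(\theta a+\theta^2 b)<(\theta-1)(\theta+1)^2<\theta c+\theta^2 d$, and consider on $\mathcal{I}=[0,1]^2$ the system $$\dot x=x(1-x)\big[xr(-c+d-a+b)+x(a-b)-r(d+b)+b\big]+\mu(1-2x),\qquad \dot r=r(1-r)\big[\theta x-(1-x)\big].$$ Then for every $\mu\in(0,1]$, all equilibria of the system lying on the boundary $\partial\mathcal{I}$ of the square are unstable. *)

(* Defs.v *)
From Stdlib Require Import Reals.
Open Scope R_scope.

Definition F1 (a b c d mu : R) (x r : R) : R :=
  x * (1 - x) * (x * r * (- c + d - a + b) + x * (a - b) - r * (d + b) + b)
  + mu * (1 - 2 * x).

Definition F2 (theta : R) (x r : R) : R :=
  r * (1 - r) * (theta * x - (1 - x)).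

Definition in_square (x r : R) : Prop := 0 <= x <= 1 /\ 0 <= r <= 1.

Definition on_boundary (x r : R) : Prop :=
  in_square x r /\ (x = 0 \/ x = 1 \/ r = 0 \/ r = 1).

Definition is_equilibrium (a b c d mu theta : R) (x r : R) : Prop :=
  F1 a b c d mu x r = 0 /\ F2 theta x r = 0.

Definition dist2 (x1 r1 x2 r2 : R) : R :=
  sqrt ((x1 - x2) ^ 2 + (r1 - r2) ^ 2).

Definition is_forward_solution (a b c d mu theta : R) (X Rr : R -> R) : Prop :=
  (forall t, 0 < t ->
     derivable_pt_lim X t (F1 a b c d mu (X t) (Rr t)) /\
     derivable_pt_lim Rr t (F2 theta (X t) (Rr t))) /\
  (forall eps, 0 < eps -> exists del, 0 < del /\
     forall t, 0 <= t < del -> Rabs (X t - X 0) < eps /\ Rabs (Rr t - Rr 0) < eps).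

Definition lyapunov_stable (a b c d mu theta : R) (x0 r0 : R) : Prop :=
  forall eps, 0 < eps -> exists del, 0 < del /\
    forall X Rr : R -> R,
      is_forward_solution a b c d mu theta X Rr ->
      in_square (X 0) (Rr 0) ->
      dist2 (X 0) (Rr 0) x0 r0 < del ->
      forall t, 0 <= t -> dist2 (X t) (Rr t) x0 r0 < eps.

Definition unstable (a b c d mu theta : R) (x0 r0 : R) : Prop :=
  ~ lyapunov_stable a b c d mu theta x0 r0.

(* Main.v *)
Require Import Defs.
From Stdlib Require Import Reals Lra Lia Psatz FunctionalExtensionality Classical.
From Coquelicot Require Import Coquelicot.
Open Scope R_scope.


Lemma lip_cont (h : R -> R) (t K : R) :
  (forall s, Rabs (h s - h t) <= K * Rabs (s - t)) -> continuous h t.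
Proof.
  intros H. apply continuity_pt_filterlim.
  unfold continuity_pt, continue_in, limit1_in, limit_in.
  intros eps Heps.
  assert (HK : 0 <= K).
  { specialize (H (t+1)). replace (t + 1 - t) with 1 in H by ring.
    rewrite Rabs_R1 in H. pose proof (Rabs_pos (h (t+1) - h t)). lra. }
  exists (eps / (K + 1)). split.
  { apply Rdiv_lt_0_compat; lra. }
  intros x [_ Hx]. simpl in *. unfold Rdist in *.
  eapply Rle_lt_trans. apply H.
  apply Rle_lt_trans with (K * (eps / (K+1))).
  { apply Rmult_le_compat_l; lra. }
  apply Rlt_le_trans with ((K+1) * (eps / (K+1))).
  { apply Rmult_lt_compat_r. apply Rdiv_lt_0_compat; lra. lra. }
  right. field. lra.
Qed.

Lemma ex_RInt_cont (h : R -> R) a b : (forall s, continuous h s) -> ex_RInt h a b.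
Proof. intros H. apply (ex_RInt_continuous (V:=R_CompleteNormedModule)). intros; apply H. Qed.

Lemma int_lip (h : R -> R) (M : R) :
  (forall s, continuous h s) -> (forall s, Rabs (h s) <= M) ->
  forall s t, Rabs (RInt h 0 t - RInt h 0 s) <= M * Rabs (t - s).
Proof.
  intros Hc Hb s t.
  rewrite <- (RInt_Chasles h 0 s t) by (apply ex_RInt_cont; auto).
  change (plus (RInt h 0 s) (RInt h s t)) with (RInt h 0 s + RInt h s t).
  replace (RInt h 0 s + RInt h s t - RInt h 0 s) with (0 + RInt h s t) by ring.
  rewrite Rplus_0_l.
  destruct (Rle_dec s t) as [Hst|Hst].
  - rewrite (Rabs_right (t - s)) by lra. rewrite Rmult_comm.
    apply abs_RInt_le_const; auto. apply ex_RInt_cont; auto.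
  - rewrite <- opp_RInt_swap by (apply ex_RInt_cont; auto).
    change (opp (RInt h t s)) with (- RInt h t s). rewrite Rabs_Ropp.
    rewrite (Rabs_left (t - s)) by lra. rewrite Rmult_comm.
    replace (- (t - s)) with (s - t) by ring.
    apply abs_RInt_le_const; auto. lra. apply ex_RInt_cont; auto.
Qed.

Lemma is_RInt_pow (K : R) (n : nat) (t : R) :
  is_RInt (fun s => K * s ^ n) 0 t (K * t ^ (S n) / INR (S n)).
Proof.
  replace (K * t ^ (S n) / INR (S n)) with
    (minus (K * t ^ (S n) / INR (S n)) (K * 0 ^ (S n) / INR (S n))).
  2:{ simpl. change (minus ?a ?b) with (a - b). rewrite Rmult_0_l. unfold Rdiv. ring. }
  apply (is_RInt_derive (fun s => K * s ^ (S n) / INR (S n))).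
  - intros x _. apply is_derive_Reals.
    assert (H := derivable_pt_lim_pow x (S n)).
    assert (Hn : INR (S n) <> 0) by (apply not_0_INR; lia).
    replace (K * x ^ n) with ((K / INR (S n)) * (INR (S n) * x ^ Init.Nat.pred (S n))).
    2:{ simpl pred. field. auto. }
    replace (fun s => K * s ^ S n / INR (S n)) with (fun s => (K / INR (S n)) * (fun y => y ^ S n) s).
    2:{ apply functional_extensionality. intros; unfold Rdiv; ring. }
    apply derivable_pt_lim_scal. auto.
  - intros x _. apply (ex_derive_continuous (V:=R_NormedModule)). auto_derive. auto.
Qed.

Lemma int_pow_bound (h : R -> R) (K : R) (n : nat) (t : R) :
  (forall s, continuous h s) -> 0 <= t ->
  (forall s, 0 <= s <= t -> Rabs (h s) <= K * s ^ n) ->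
  Rabs (RInt h 0 t) <= K * t ^ (S n) / INR (S n).
Proof.
  intros Hc Ht Hb.
  assert (Ig := is_RInt_pow K n t).
  assert (Eg : ex_RInt (fun s => K * s ^ n) 0 t) by (eexists; eauto).
  assert (Vg : RInt (fun s => K * s ^ n) 0 t = K * t ^ (S n) / INR (S n))
    by (apply is_RInt_unique; auto).
  assert (Eh : ex_RInt h 0 t) by (apply ex_RInt_cont; auto).
  assert (H1 : RInt h 0 t <= RInt (fun s => K * s ^ n) 0 t).
  { apply RInt_le; auto. intros x Hx. specialize (Hb x ltac:(lra)).
    apply Rabs_le_between in Hb. lra. }
  assert (H2 : RInt (fun s => - (h s)) 0 t <= RInt (fun s => K * s ^ n) 0 t).
  { apply RInt_le; auto.
    - apply (ex_RInt_opp (V:=R_NormedModule)); auto.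
    - intros x Hx. specialize (Hb x ltac:(lra)).
      apply Rabs_le_between in Hb. lra. }
  assert (E : RInt (fun s => - (h s)) 0 t = - RInt h 0 t) by exact (RInt_opp h 0 t Eh).
  rewrite E in H2.
  rewrite Vg in H1, H2. apply Rabs_le. lra.
Qed.


Lemma locally_pos t : 0 < t -> locally t (fun u => 0 < u).
Proof.
  intros Ht. exists (mkposreal t Ht). intros u Hu.
  change (Rabs (u - t) < t) in Hu. apply Rabs_lt_between in Hu. simpl in Hu. lra.
Qed.

Lemma cv_le_const (u : nat -> R) l K n0 :
  Un_cv u l -> (forall m, (n0 <= m)%nat -> u m <= K) -> l <= K.
Proof.
  intros Hc Hb. destruct (Rle_dec l K) as [|Hn]; auto.
  exfalso. destruct (Hc (l - K)) as [N HN]; [lra|].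
  specialize (HN (max N n0) ltac:(lia)). specialize (Hb (max N n0) ltac:(lia)).
  unfold Rdist in HN. apply Rabs_lt_between in HN. lra.
Qed.

Lemma Rmax_lip s t : Rabs (Rmax 0 s - Rmax 0 t) <= Rabs (s - t).
Proof.
  unfold Rmax; destruct (Rle_dec 0 s); destruct (Rle_dec 0 t);
  unfold Rabs; repeat destruct Rcase_abs; lra.
Qed.

Section Picard.
Variables (G1 G2 : R -> R -> R) (M L x0 z0 : R).
Hypothesis HL : 0 < L.
Hypothesis Hb : forall x z, Rabs (G1 x z) <= M /\ Rabs (G2 x z) <= M.
Hypothesis Hl : forall x z x' z',
  Rabs (G1 x z - G1 x' z') <= L * (Rabs (x - x') + Rabs (z - z')) /\
  Rabs (G2 x z - G2 x' z') <= L * (Rabs (x - x') + Rabs (z - z')).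

Lemma HM : 0 <= M.
Proof. destruct (Hb 0 0). pose proof (Rabs_pos (G1 0 0)). lra. Qed.

Lemma comp_cont (X Z : R -> R) (K : R) :
  (forall s t, Rabs (X s - X t) <= K * Rabs (s - t) /\ Rabs (Z s - Z t) <= K * Rabs (s - t)) ->
  forall t, continuous (fun s => G1 (X s) (Z s)) t /\ continuous (fun s => G2 (X s) (Z s)) t.
Proof.
  intros H t. split; apply lip_cont with (L * (2 * K)); intros s;
  destruct (Hl (X s) (Z s) (X t) (Z t)) as [H1 H2]; destruct (H s t) as [H3 H4].
  - eapply Rle_trans; [apply H1|]. nra.
  - eapply Rle_trans; [apply H2|]. nra.
Qed.

Fixpoint pic (n : nat) : (R -> R) * (R -> R) :=
  match n with
  | O => (fun _ => x0, fun _ => z0)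
  | S n => let p := pic n in
      (fun t => x0 + RInt (fun s => G1 (fst p s) (snd p s)) 0 t,
       fun t => z0 + RInt (fun s => G2 (fst p s) (snd p s)) 0 t)
  end.

Lemma pic_lip n : forall s t,
  Rabs (fst (pic n) s - fst (pic n) t) <= M * Rabs (s - t) /\
  Rabs (snd (pic n) s - snd (pic n) t) <= M * Rabs (s - t).
Proof.
  pose proof HM.
  induction n as [|n IH]; intros s t.
  - simpl. rewrite !Rminus_diag, Rabs_R0. pose proof (Rabs_pos (s - t)). split; nra.
  - assert (C := comp_cont _ _ _ IH). simpl.
    replace (x0 + RInt (fun s0 => G1 (fst (pic n) s0) (snd (pic n) s0)) 0 s -
      (x0 + RInt (fun s0 => G1 (fst (pic n) s0) (snd (pic n) s0)) 0 t)) with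
      (RInt (fun s0 => G1 (fst (pic n) s0) (snd (pic n) s0)) 0 s -
       RInt (fun s0 => G1 (fst (pic n) s0) (snd (pic n) s0)) 0 t) by ring.
    replace (z0 + RInt (fun s0 => G2 (fst (pic n) s0) (snd (pic n) s0)) 0 s -
      (z0 + RInt (fun s0 => G2 (fst (pic n) s0) (snd (pic n) s0)) 0 t)) with
      (RInt (fun s0 => G2 (fst (pic n) s0) (snd (pic n) s0)) 0 s -
       RInt (fun s0 => G2 (fst (pic n) s0) (snd (pic n) s0)) 0 t) by ring.
    split; apply int_lip; intros; try apply C; apply Hb.
Qed.

Lemma pic_cont n t :
  continuous (fun s => G1 (fst (pic n) s) (snd (pic n) s)) t /\
  continuous (fun s => G2 (fst (pic n) s) (snd (pic n) s)) t.
Proof. apply (comp_cont _ _ M). apply pic_lip. Qed.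


Lemma RInt_sub_eq (f g : R -> R) a b :
  (forall s, continuous f s) -> (forall s, continuous g s) ->
  RInt f a b - RInt g a b = RInt (fun s => f s - g s) a b.
Proof.
  intros Hf Hg. symmetry.
  exact (RInt_minus f g a b (ex_RInt_cont f a b Hf) (ex_RInt_cont g a b Hg)).
Qed.

Lemma pic_diff n : forall t, 0 <= t ->
  Rabs (fst (pic (S n)) t - fst (pic n) t) + Rabs (snd (pic (S n)) t - snd (pic n) t)
  <= (M / L) * (2 * L * t) ^ (S n) / INR (Factorial.fact (S n)).
Proof.
  pose proof HM.
  induction n as [|n IH]; intros t Ht.
  - simpl fst; simpl snd.
    replace (x0 + RInt (fun s => G1 x0 z0) 0 t - x0) with (RInt (fun s => G1 x0 z0) 0 t + 0) by ring.
    replace (z0 + RInt (fun s => G2 x0 z0) 0 t - z0) with (RInt (fun s => G2 x0 z0) 0 t + 0) by ring.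
    rewrite !Rplus_0_r.
    assert (B1 : Rabs (RInt (fun s => G1 x0 z0) 0 t) <= M * t ^ 1 / INR 1).
    { apply int_pow_bound; auto. intros; apply continuous_const. intros; simpl; rewrite Rmult_1_r; apply Hb. }
    assert (B2 : Rabs (RInt (fun s => G2 x0 z0) 0 t) <= M * t ^ 1 / INR 1).
    { apply int_pow_bound; auto. intros; apply continuous_const. intros; simpl; rewrite Rmult_1_r; apply Hb. }
    simpl in B1, B2 |- *. replace (M / L * (2 * L * t * 1) / 1) with (M * (t * 1) / 1 + M * (t * 1) / 1).
    lra. field. lra.
  - set (K := M * (2 * L) ^ (S n) / INR (Factorial.fact (S n))).
    assert (HK : forall s, 0 <= s <= t ->
      Rabs (G1 (fst (pic (S n)) s) (snd (pic (S n)) s) - G1 (fst (pic n) s) (snd (pic n) s)) <= K * s ^ (S n) /\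
      Rabs (G2 (fst (pic (S n)) s) (snd (pic (S n)) s) - G2 (fst (pic n) s) (snd (pic n) s)) <= K * s ^ (S n)).
    { intros s Hs. specialize (IH s ltac:(lra)).
      destruct (Hl (fst (pic (S n)) s) (snd (pic (S n)) s) (fst (pic n) s) (snd (pic n) s)) as [H1 H2].
      assert (E : L * ((M / L) * (2 * L * s) ^ (S n) / INR (Factorial.fact (S n))) = K * s ^ (S n)).
      { unfold K. rewrite Rpow_mult_distr. field. split. apply INR_fact_neq_0. lra. }
      split; (eapply Rle_trans; [eassumption|]); rewrite <- E; apply Rmult_le_compat_l; lra. }
    assert (C0 := pic_cont n). assert (C1 := pic_cont (S n)).
    assert (B1 : Rabs (fst (pic (S (S n))) t - fst (pic (S n)) t) <= K * t ^ (S (S n)) / INR (S (S n))).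
    { change (fst (pic (S (S n))) t) with
        (x0 + RInt (fun s => G1 (fst (pic (S n)) s) (snd (pic (S n)) s)) 0 t).
      change (fst (pic (S n)) t) with
        (x0 + RInt (fun s => G1 (fst (pic n) s) (snd (pic n) s)) 0 t).
      replace (x0 + RInt (fun s => G1 (fst (pic (S n)) s) (snd (pic (S n)) s)) 0 t -
        (x0 + RInt (fun s => G1 (fst (pic n) s) (snd (pic n) s)) 0 t)) with
        (RInt (fun s => G1 (fst (pic (S n)) s) (snd (pic (S n)) s)) 0 t -
        RInt (fun s => G1 (fst (pic n) s) (snd (pic n) s)) 0 t) by ring.
      rewrite RInt_sub_eq by (intros; first [apply C0 | apply C1]).
      apply int_pow_bound; auto.
      - intros s. apply (continuous_minus (V:=R_NormedModule)); first [apply C0 | apply C1].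
      - intros s Hs. apply HK; auto. }
    assert (B2 : Rabs (snd (pic (S (S n))) t - snd (pic (S n)) t) <= K * t ^ (S (S n)) / INR (S (S n))).
    { change (snd (pic (S (S n))) t) with
        (z0 + RInt (fun s => G2 (fst (pic (S n)) s) (snd (pic (S n)) s)) 0 t).
      change (snd (pic (S n)) t) with
        (z0 + RInt (fun s => G2 (fst (pic n) s) (snd (pic n) s)) 0 t).
      replace (z0 + RInt (fun s => G2 (fst (pic (S n)) s) (snd (pic (S n)) s)) 0 t -
        (z0 + RInt (fun s => G2 (fst (pic n) s) (snd (pic n) s)) 0 t)) with
        (RInt (fun s => G2 (fst (pic (S n)) s) (snd (pic (S n)) s)) 0 t -
        RInt (fun s => G2 (fst (pic n) s) (snd (pic n) s)) 0 t) by ring.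
      rewrite RInt_sub_eq by (intros; first [apply C0 | apply C1]).
      apply int_pow_bound; auto.
      - intros s. apply (continuous_minus (V:=R_NormedModule)); first [apply C0 | apply C1].
      - intros s Hs. apply HK; auto. }
    assert (E : 2 * (K * t ^ (S (S n)) / INR (S (S n))) =
       (M / L) * (2 * L * t) ^ (S (S n)) / INR (Factorial.fact (S (S n)))).
    { unfold K. rewrite (Rpow_mult_distr (2 * L) t).
      replace (Factorial.fact (S (S n))) with (S (S n) * Factorial.fact (S n))%nat by reflexivity.
      rewrite mult_INR. change ((2 * L) ^ S (S n)) with ((2 * L) * (2 * L) ^ (S n)).
      field. repeat split; try apply INR_fact_neq_0; try (apply not_0_INR; lia); lra. }
    lra.
Qed.


Definition term (T : R) (i : nat) : R := / INR (Factorial.fact i) * (2 * L * T) ^ i.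
Definition Ssum T n := sum_f_R0 (term T) n.

Lemma Ssum_cv T : Un_cv (Ssum T) (exp (2 * L * T)).
Proof. exact (proj2_sig (exist_exp (2 * L * T))). Qed.

Lemma term_pos T i : 0 <= T -> 0 <= term T i.
Proof.
  intros HT. unfold term. apply Rmult_le_pos.
  - left. apply Rinv_0_lt_compat. apply INR_fact_lt_0.
  - apply pow_le. nra.
Qed.

Lemma Ssum_grow T : 0 <= T -> Un_growing (Ssum T).
Proof. intros HT n. unfold Ssum. simpl. pose proof (term_pos T (S n) HT). lra. Qed.

Lemma pic_tail T n k : 0 <= T -> forall s, 0 <= s <= T ->
  Rabs (fst (pic (n + k)) s - fst (pic n) s) + Rabs (snd (pic (n + k)) s - snd (pic n) s)
  <= (M / L) * (Ssum T (n + k) - Ssum T n).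
Proof.
  pose proof HM.
  intros HT s Hs. induction k as [|k IH].
  - rewrite Nat.add_0_r. rewrite !Rminus_diag, Rabs_R0. lra.
  - rewrite Nat.add_succ_r.
    assert (D := pic_diff (n + k) s ltac:(lra)).
    assert (Tm : (M / L) * (2 * L * s) ^ (S (n + k)) / INR (Factorial.fact (S (n + k)))
                 <= (M / L) * term T (S (n + k))).
    { unfold term. unfold Rdiv. rewrite (Rmult_comm (/ INR _)). rewrite Rmult_assoc.
      apply Rmult_le_compat_l. apply Rdiv_le_0_compat; lra.
      apply Rmult_le_compat_r. left. apply Rinv_0_lt_compat. apply INR_fact_lt_0.
      apply pow_incr. nra. }
    assert (Es : Ssum T (S (n + k)) = Ssum T (n + k) + term T (S (n + k))) by reflexivity.
    rewrite Es.
    assert (T1 := Rabs_triang (fst (pic (S (n + k))) s - fst (pic (n + k)) s) (fst (pic (n + k)) s - fst (pic n) s)).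
    assert (T2 := Rabs_triang (snd (pic (S (n + k))) s - snd (pic (n + k)) s) (snd (pic (n + k)) s - snd (pic n) s)).
    replace (fst (pic (S (n + k))) s - fst (pic (n + k)) s + (fst (pic (n + k)) s - fst (pic n) s))
      with (fst (pic (S (n + k))) s - fst (pic n) s) in T1 by ring.
    replace (snd (pic (S (n + k))) s - snd (pic (n + k)) s + (snd (pic (n + k)) s - snd (pic n) s))
      with (snd (pic (S (n + k))) s - snd (pic n) s) in T2 by ring.
    lra.
Qed.

Lemma pic_tail' T n m : 0 <= T -> (n <= m)%nat -> forall s, 0 <= s <= T ->
  Rabs (fst (pic m) s - fst (pic n) s) + Rabs (snd (pic m) s - snd (pic n) s)
  <= (M / L) * (Ssum T m - Ssum T n).
Proof.
  intros HT Hnm. replace m with (n + (m - n))%nat by lia. apply pic_tail; auto.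
Qed.

Lemma pic_cauchy t :
  Cauchy_crit (fun n => fst (pic n) (Rmax 0 t)) /\ Cauchy_crit (fun n => snd (pic n) (Rmax 0 t)).
Proof.
  pose proof HM.
  set (T := Rmax 0 t). assert (HT : 0 <= T) by apply Rmax_l.
  assert (Cs := CV_Cauchy (Ssum T) (exist _ _ (Ssum_cv T))).
  assert (Main : forall eps, eps > 0 -> exists N, forall n m, (n >= N)%nat -> (m >= N)%nat ->
     Rabs (fst (pic n) T - fst (pic m) T) + Rabs (snd (pic n) T - snd (pic m) T) < eps).
  { intros eps Heps.
    destruct (Cs (eps / (M / L + 1))) as [N HN].
    { apply Rdiv_lt_0_compat. lra. assert (0 <= M / L) by (apply Rdiv_le_0_compat; lra). lra. }
    exists N. intros n m Hn Hm. specialize (HN n m Hn Hm). unfold Rdist in HN.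
    assert (HML : 0 <= M / L) by (apply Rdiv_le_0_compat; lra).
    assert (Hx : (M / L) * Rabs (Ssum T n - Ssum T m) < eps).
    { apply Rle_lt_trans with ((M / L + 1) * Rabs (Ssum T n - Ssum T m)).
      pose proof (Rabs_pos (Ssum T n - Ssum T m)). nra.
      apply Rlt_le_trans with ((M / L + 1) * (eps / (M / L + 1))).
      apply Rmult_lt_compat_l; lra. right; field; lra. }
    destruct (Nat.le_ge_cases n m) as [Hnm|Hnm].
    - assert (B := pic_tail' T n m HT Hnm T ltac:(lra)).
      rewrite (Rabs_minus_sym (fst (pic n) T)), (Rabs_minus_sym (snd (pic n) T)).
      rewrite Rabs_minus_sym in Hx.
      pose proof (Rle_abs (Ssum T m - Ssum T n)). nra.
    - assert (B := pic_tail' T m n HT Hnm T ltac:(lra)).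
      pose proof (Rle_abs (Ssum T n - Ssum T m)). nra. }
  split; intros eps Heps; destruct (Main eps Heps) as [N HN]; exists N; intros n m Hn Hm;
    specialize (HN n m Hn Hm); unfold Rdist;
    pose proof (Rabs_pos (fst (pic n) T - fst (pic m) T));
    pose proof (Rabs_pos (snd (pic n) T - snd (pic m) T)); lra.
Qed.

Definition y1 (t : R) : R := proj1_sig (Rcomplete.R_complete _ (proj1 (pic_cauchy t))).
Definition y2 (t : R) : R := proj1_sig (Rcomplete.R_complete _ (proj2 (pic_cauchy t))).

Lemma y1_cv t : Un_cv (fun n => fst (pic n) (Rmax 0 t)) (y1 t).
Proof. unfold y1. destruct (Rcomplete.R_complete _ _); auto. Qed.
Lemma y2_cv t : Un_cv (fun n => snd (pic n) (Rmax 0 t)) (y2 t).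
Proof. unfold y2. destruct (Rcomplete.R_complete _ _); auto. Qed.


Lemma cv_const c : Un_cv (fun _ => c) c.
Proof. intros eps He. exists 0%nat. intros. unfold Rdist. rewrite Rminus_diag, Rabs_R0. lra. Qed.

Lemma y_tail T n : 0 <= T -> forall s, 0 <= s <= T ->
  Rabs (y1 s - fst (pic n) s) + Rabs (y2 s - snd (pic n) s) <= (M / L) * (exp (2 * L * T) - Ssum T n).
Proof.
  pose proof HM. intros HT s Hs.
  assert (Rs : Rmax 0 s = s) by (apply Rmax_right; lra).
  assert (C1 := y1_cv s). assert (C2 := y2_cv s). rewrite Rs in C1, C2.
  assert (C := CV_plus _ _ _ _ (cv_cvabs _ _ (CV_minus _ _ _ _ C1 (cv_const (fst (pic n) s))))
                              (cv_cvabs _ _ (CV_minus _ _ _ _ C2 (cv_const (snd (pic n) s))))).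
  apply (cv_le_const _ _ _ n C). intros m Hm. simpl.
  eapply Rle_trans. apply (pic_tail' T n m HT Hm s Hs).
  apply Rmult_le_compat_l. apply Rdiv_le_0_compat; lra.
  pose proof (growing_ineq _ _ (Ssum_grow T HT) (Ssum_cv T) m). lra.
Qed.

Lemma y_lip s t : Rabs (y1 s - y1 t) <= M * Rabs (s - t) /\ Rabs (y2 s - y2 t) <= M * Rabs (s - t).
Proof.
  pose proof HM. pose proof (Rmax_lip s t).
  split.
  - assert (C := cv_cvabs _ _ (CV_minus _ _ _ _ (y1_cv s) (y1_cv t))).
    apply (cv_le_const _ _ _ 0%nat C). intros m _. simpl.
    eapply Rle_trans. apply (pic_lip m). nra.
  - assert (C := cv_cvabs _ _ (CV_minus _ _ _ _ (y2_cv s) (y2_cv t))).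
    apply (cv_le_const _ _ _ 0%nat C). intros m _. simpl.
    eapply Rle_trans. apply (pic_lip m). nra.
Qed.

Lemma pic_0 n : fst (pic n) 0 = x0 /\ snd (pic n) 0 = z0.
Proof.
  destruct n; simpl; auto. rewrite !RInt_point. change (@zero R_CompleteNormedModule) with 0.
  split; ring.
Qed.

Lemma y_0 : y1 0 = x0 /\ y2 0 = z0.
Proof.
  assert (R0 : Rmax 0 0 = 0) by (apply Rmax_right; lra).
  split.
  - apply (UL_sequence (fun n => fst (pic n) (Rmax 0 0))). apply y1_cv.
    rewrite R0. eapply Un_cv_ext. 2: apply (cv_const x0). intros n; simpl. symmetry; apply pic_0.
  - apply (UL_sequence (fun n => snd (pic n) (Rmax 0 0))). apply y2_cv.
    rewrite R0. eapply Un_cv_ext. 2: apply (cv_const z0). intros n; simpl. symmetry; apply pic_0.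
Qed.


Lemma small_zero a : (forall eps, 0 < eps -> Rabs a <= eps) -> a = 0.
Proof.
  intros H. destruct (Req_dec a 0) as [|Hn]; auto.
  pose proof (Rabs_pos_lt a Hn). specialize (H (Rabs a / 2) ltac:(lra)). lra.
Qed.

Lemma y_cont t : continuous (fun s => G1 (y1 s) (y2 s)) t /\ continuous (fun s => G2 (y1 s) (y2 s)) t.
Proof. apply (comp_cont _ _ M). apply y_lip. Qed.

Lemma S_close T eps : 0 < eps -> exists n, exp (2 * L * T) - Ssum T n <= eps.
Proof.
  intros He. destruct (Ssum_cv T eps He) as [N HN]. exists N.
  specialize (HN N (le_n _)). unfold Rdist in HN. apply Rabs_lt_between in HN. lra.
Qed.

Lemma y_int t : 0 <= t ->
  y1 t = x0 + RInt (fun s => G1 (y1 s) (y2 s)) 0 t /\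
  y2 t = z0 + RInt (fun s => G2 (y1 s) (y2 s)) 0 t.
Proof.
  pose proof HM. intros Ht.
  set (E := exp (2 * L * t)).
  assert (HML : 0 <= M / L) by (apply Rdiv_le_0_compat; lra).
  assert (Gen : forall n, 
    Rabs (y1 t - (x0 + RInt (fun s => G1 (y1 s) (y2 s)) 0 t)) <= (E - Ssum t n) * (M / L + M * t) /\
    Rabs (y2 t - (z0 + RInt (fun s => G2 (y1 s) (y2 s)) 0 t)) <= (E - Ssum t n) * (M / L + M * t)).
  { intros n.
    assert (Tl := y_tail t (S n) Ht t ltac:(lra)).
    assert (Gr := Ssum_grow t Ht n).
    assert (K : forall s, 0 <= s <= t ->
      Rabs (G1 (fst (pic n) s) (snd (pic n) s) - G1 (y1 s) (y2 s)) <= M * (E - Ssum t n) * s ^ 0 /\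
      Rabs (G2 (fst (pic n) s) (snd (pic n) s) - G2 (y1 s) (y2 s)) <= M * (E - Ssum t n) * s ^ 0).
    { intros s Hs. assert (Y := y_tail t n Ht s Hs).
      rewrite (Rabs_minus_sym (y1 s)), (Rabs_minus_sym (y2 s)) in Y.
      destruct (Hl (fst (pic n) s) (snd (pic n) s) (y1 s) (y2 s)) as [H1 H2].
      simpl pow. rewrite Rmult_1_r.
      assert (EE : L * ((M / L) * (E - Ssum t n)) = M * (E - Ssum t n)) by (field; lra).
      split; (eapply Rle_trans; [eassumption|]); rewrite <- EE; apply Rmult_le_compat_l; try lra; fold E in Y; lra. }
    assert (C0 := pic_cont n). assert (Cy := y_cont).
    assert (P1 := Rabs_pos (y1 t - fst (pic (S n)) t)).
    assert (P2 := Rabs_pos (y2 t - snd (pic (S n)) t)).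
    split.
    - assert (B : Rabs (RInt (fun s => G1 (fst (pic n) s) (snd (pic n) s) - G1 (y1 s) (y2 s)) 0 t)
                  <= M * (E - Ssum t n) * t ^ 1 / INR 1).
      { apply int_pow_bound; auto. intros s. apply (continuous_minus (V:=R_NormedModule)); first [apply C0 | apply Cy].
        intros; apply K; auto. }
      rewrite <- RInt_sub_eq in B by (intros; first [apply C0 | apply Cy]).
      change (fst (pic (S n)) t) with (x0 + RInt (fun s => G1 (fst (pic n) s) (snd (pic n) s)) 0 t) in P1, Tl.
      simpl in B. rewrite Rmult_1_r, Rdiv_1_r in B.
      assert (Tr := Rabs_triang (y1 t - (x0 + RInt (fun s => G1 (fst (pic n) s) (snd (pic n) s)) 0 t))
         (RInt (fun s => G1 (fst (pic n) s) (snd (pic n) s)) 0 t - RInt (fun s => G1 (y1 s) (y2 s)) 0 t)).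
      match type of Tr with Rabs ?a <= _ => replace a with (y1 t - (x0 + RInt (fun s => G1 (y1 s) (y2 s)) 0 t)) in Tr by ring end.
      fold E in Tl. assert ((M/L)*(E - Ssum t (S n)) <= (M/L)*(E - Ssum t n)) by (apply Rmult_le_compat_l; lra).
      lra.
    - assert (B : Rabs (RInt (fun s => G2 (fst (pic n) s) (snd (pic n) s) - G2 (y1 s) (y2 s)) 0 t)
                  <= M * (E - Ssum t n) * t ^ 1 / INR 1).
      { apply int_pow_bound; auto. intros s. apply (continuous_minus (V:=R_NormedModule)); first [apply C0 | apply Cy].
        intros; apply K; auto. }
      rewrite <- RInt_sub_eq in B by (intros; first [apply C0 | apply Cy]).
      change (snd (pic (S n)) t) with (z0 + RInt (fun s => G2 (fst (pic n) s) (snd (pic n) s)) 0 t) in P2, Tl.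
      simpl in B. rewrite Rmult_1_r, Rdiv_1_r in B.
      assert (Tr := Rabs_triang (y2 t - (z0 + RInt (fun s => G2 (fst (pic n) s) (snd (pic n) s)) 0 t))
         (RInt (fun s => G2 (fst (pic n) s) (snd (pic n) s)) 0 t - RInt (fun s => G2 (y1 s) (y2 s)) 0 t)).
      match type of Tr with Rabs ?a <= _ => replace a with (y2 t - (z0 + RInt (fun s => G2 (y1 s) (y2 s)) 0 t)) in Tr by ring end.
      fold E in Tl. assert ((M/L)*(E - Ssum t (S n)) <= (M/L)*(E - Ssum t n)) by (apply Rmult_le_compat_l; lra).
      lra. }
  assert (Fin : forall eps, 0 < eps -> exists n, (E - Ssum t n) * (M / L + M * t) <= eps).
  { intros eps He. destruct (S_close t (eps / (M / L + M * t + 1))) as [n Hn].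
    { apply Rdiv_lt_0_compat; nra. }
    exists n. pose proof (growing_ineq _ _ (Ssum_grow t Ht) (Ssum_cv t) n). fold E in H0, Hn.
    apply Rle_trans with ((eps / (M / L + M * t + 1)) * (M / L + M * t + 1)).
    - apply Rle_trans with ((E - Ssum t n) * (M / L + M * t + 1)). nra.
      apply Rmult_le_compat_r; nra.
    - right. field. assert (0 <= M * t * L) by (apply Rmult_le_pos; [apply Rmult_le_pos|]; lra). split; lra. }
  split; apply Rminus_diag_uniq; apply small_zero; intros eps He;
    destruct (Fin eps He) as [n Hn]; destruct (Gen n); lra.
Qed.


Lemma y_deriv t : 0 < t ->
  derivable_pt_lim y1 t (G1 (y1 t) (y2 t)) /\ derivable_pt_lim y2 t (G2 (y1 t) (y2 t)).
Proof.
  intros Ht.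
  assert (Loc : locally t (fun u => 0 <= u)).
  { eapply filter_imp; [|apply (locally_pos t Ht)]. intros; simpl; lra. }
  split; apply is_derive_Reals.
  - set (h := fun s => G1 (y1 s) (y2 s)).
    assert (D : is_derive (fun u => RInt h 0 u) t (h t)).
    { apply is_derive_RInt with (a := 0).
      - apply filter_forall. intros u. apply RInt_correct. apply ex_RInt_cont. intros; apply y_cont.
      - apply y_cont. }
    assert (D2 := is_derive_plus (fun _ : R => x0) (fun u => RInt h 0 u) t zero (h t) (is_derive_const x0 t) D).
    rewrite plus_zero_l in D2.
    apply (is_derive_ext_loc _ _ _ _ (filter_imp _ _ (fun u Hu => eq_sym (proj1 (y_int u Hu))) Loc) D2).
  - set (h := fun s => G2 (y1 s) (y2 s)).
    assert (D : is_derive (fun u => RInt h 0 u) t (h t)).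
    { apply is_derive_RInt with (a := 0).
      - apply filter_forall. intros u. apply RInt_correct. apply ex_RInt_cont. intros; apply y_cont.
      - apply y_cont. }
    assert (D2 := is_derive_plus (fun _ : R => z0) (fun u => RInt h 0 u) t zero (h t) (is_derive_const z0 t) D).
    rewrite plus_zero_l in D2.
    apply (is_derive_ext_loc _ _ _ _ (filter_imp _ _ (fun u Hu => eq_sym (proj2 (y_int u Hu))) Loc) D2).
Qed.

End Picard.

Theorem ode_exists (G1 G2 : R -> R -> R) (M L x0 z0 : R) :
  0 < L ->
  (forall x z, Rabs (G1 x z) <= M /\ Rabs (G2 x z) <= M) ->
  (forall x z x' z',
    Rabs (G1 x z - G1 x' z') <= L * (Rabs (x - x') + Rabs (z - z')) /\
    Rabs (G2 x z - G2 x' z') <= L * (Rabs (x - x') + Rabs (z - z'))) ->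
  exists X Z : R -> R, X 0 = x0 /\ Z 0 = z0 /\
    (forall s t, Rabs (X s - X t) <= M * Rabs (s - t) /\ Rabs (Z s - Z t) <= M * Rabs (s - t)) /\
    (forall t, 0 < t -> derivable_pt_lim X t (G1 (X t) (Z t)) /\ derivable_pt_lim Z t (G2 (X t) (Z t))).
Proof.
  intros HL Hb Hl.
  exists (y1 G1 G2 M L x0 z0 HL Hb Hl), (y2 G1 G2 M L x0 z0 HL Hb Hl).
  destruct (y_0 G1 G2 M L x0 z0 HL Hb Hl) as [A B].
  split; [exact A|]. split; [exact B|]. split.
  - apply y_lip.
  - apply y_deriv.
Qed.


Definition cl (x : R) : R := Rmax 0 (Rmin 1 x).
Definition sgm (z : R) : R := / (1 + exp (- z)).

Lemma cl_range x : 0 <= cl x <= 1.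
Proof. unfold cl, Rmax, Rmin; repeat destruct Rle_dec; lra. Qed.
Lemma cl_lip x y : Rabs (cl x - cl y) <= Rabs (x - y).
Proof. unfold cl, Rmax, Rmin; repeat destruct Rle_dec; unfold Rabs; repeat destruct Rcase_abs; lra. Qed.
Lemma cl_id x : 0 <= x <= 1 -> cl x = x.
Proof. unfold cl, Rmax, Rmin; repeat destruct Rle_dec; lra. Qed.
Lemma cl_le0 x : x <= 0 -> cl x = 0.
Proof. unfold cl, Rmax, Rmin; repeat destruct Rle_dec; lra. Qed.
Lemma cl_ge1 x : 1 <= x -> cl x = 1.
Proof. unfold cl, Rmax, Rmin; repeat destruct Rle_dec; lra. Qed.

Lemma sgm_range z : 0 < sgm z < 1.
Proof.
  unfold sgm. pose proof (exp_pos (- z)). split.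
  - apply Rinv_0_lt_compat. lra.
  - rewrite <- Rinv_1. apply Rinv_lt_contravar; lra.
Qed.

Lemma sgm_deriv z : derivable_pt_lim sgm z (sgm z * (1 - sgm z)).
Proof.
  apply is_derive_Reals. unfold sgm.
  pose proof (exp_pos (- z)).
  auto_derive. lra. field. lra.
Qed.

Lemma sgm_cont z : continuity_pt sgm z.
Proof. apply derivable_continuous_pt. exists (sgm z * (1 - sgm z)). apply sgm_deriv. Qed.

Lemma sgm_lip z w : Rabs (sgm z - sgm w) <= Rabs (z - w).
Proof.
  destruct (MVT_gen sgm w z (fun u => sgm u * (1 - sgm u))) as [c [_ Hc]].
  - intros; apply is_derive_Reals, sgm_deriv.
  - intros; apply sgm_cont.
  - rewrite Hc, Rabs_mult. pose proof (sgm_range c).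
    assert (Rabs (sgm c * (1 - sgm c)) <= 1) by (rewrite Rabs_right; nra).
    pose proof (Rabs_pos (z - w)). nra.
Qed.

Lemma sgm_le_exp z : sgm z <= exp z.
Proof.
  unfold sgm. pose proof (exp_pos z). pose proof (exp_pos (- z)).
  assert (E : exp z * exp (- z) = 1) by (rewrite <- exp_plus; replace (z + - z) with 0 by ring; apply exp_0).
  rewrite <- (Rmult_1_l (/ _)). apply Rle_trans with (exp z * (1 + exp (- z)) * / (1 + exp (- z))).
  apply Rmult_le_compat_r. left; apply Rinv_0_lt_compat; lra. nra.
  right. field. lra.
Qed.

Lemma one_sgm_le_exp z : 1 - sgm z <= exp (- z).
Proof.
  unfold sgm. pose proof (exp_pos (- z)).
  replace (1 - / (1 + exp (- z))) with (exp (- z) / (1 + exp (- z))) by (field; lra).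
  unfold Rdiv. apply Rle_trans with (exp (- z) * 1); [|lra].
  apply Rmult_le_compat_l. lra.
  rewrite <- Rinv_1. apply Rinv_le_contravar; lra.
Qed.

Lemma sgm_ge_half z : 0 <= z -> 1/2 <= sgm z.
Proof.
  intros Hz. unfold sgm. assert (exp (- z) <= 1).
  { rewrite <- exp_0. destruct (Req_dec z 0). subst. rewrite Ropp_0. lra. left; apply exp_increasing; lra. }
  pose proof (exp_pos (- z)).
  apply Rle_trans with (/ 2). lra. apply Rinv_le_contravar; lra.
Qed.

Lemma sgm_le_half z : z <= 0 -> sgm z <= 1/2.
Proof.
  intros Hz. unfold sgm. assert (1 <= exp (- z)).
  { rewrite <- exp_0. destruct (Req_dec z 0). subst. rewrite Ropp_0. lra. left; apply exp_increasing; lra. }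
  apply Rle_trans with (/ 2). apply Rinv_le_contravar; lra. lra.
Qed.

Definition box (u v : R) : Prop := 0 <= u <= 1 /\ 0 <= v <= 1.
Definition BL (f : R -> R -> R) : Prop :=
  exists M L, 0 <= M /\ 0 <= L /\ forall u v u' v', box u v -> box u' v' ->
    Rabs (f u v) <= M /\ Rabs (f u v - f u' v') <= L * (Rabs (u - u') + Rabs (v - v')).

Lemma BL_const c : BL (fun _ _ => c).
Proof.
  exists (Rabs c), 0. split; [apply Rabs_pos|]. split; [lra|].
  intros. rewrite Rminus_diag, Rabs_R0. split; lra.
Qed.

Lemma BL_u : BL (fun u _ => u).
Proof.
  exists 1, 1. split; [lra|]. split; [lra|]. intros u v u' v' [Hu Hv] _.
  pose proof (Rabs_pos (v - v')). rewrite Rabs_right by lra. split; lra.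
Qed.

Lemma BL_v : BL (fun _ v => v).
Proof.
  exists 1, 1. split; [lra|]. split; [lra|]. intros u v u' v' [Hu Hv] _.
  pose proof (Rabs_pos (u - u')). rewrite Rabs_right by lra. split; lra.
Qed.

Lemma BL_add f g : BL f -> BL g -> BL (fun u v => f u v + g u v).
Proof.
  intros [M1 [L1 [HM1 [HL1 H1]]]] [M2 [L2 [HM2 [HL2 H2]]]].
  exists (M1 + M2), (L1 + L2). split; [lra|]. split; [lra|].
  intros u v u' v' B B'. destruct (H1 u v u' v' B B'), (H2 u v u' v' B B').
  split.
  - eapply Rle_trans. apply Rabs_triang. lra.
  - replace (f u v + g u v - (f u' v' + g u' v')) with ((f u v - f u' v') + (g u v - g u' v')) by ring.
    eapply Rle_trans. apply Rabs_triang. pose proof (Rabs_pos (u - u')). pose proof (Rabs_pos (v - v')). nra.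
Qed.

Lemma BL_opp f : BL f -> BL (fun u v => - f u v).
Proof.
  intros [M1 [L1 [HM1 [HL1 H1]]]]. exists M1, L1. split; [lra|]. split; [lra|].
  intros u v u' v' B B'. destruct (H1 u v u' v' B B'). rewrite Rabs_Ropp.
  replace (- f u v - - f u' v') with (- (f u v - f u' v')) by ring. rewrite Rabs_Ropp. split; lra.
Qed.

Lemma BL_sub f g : BL f -> BL g -> BL (fun u v => f u v - g u v).
Proof. intros. unfold Rminus. apply BL_add; auto. apply BL_opp; auto. Qed.

Lemma BL_mul f g : BL f -> BL g -> BL (fun u v => f u v * g u v).
Proof.
  intros [M1 [L1 [HM1 [HL1 H1]]]] [M2 [L2 [HM2 [HL2 H2]]]].
  exists (M1 * M2), (M1 * L2 + M2 * L1). split; [nra|]. split; [nra|].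
  intros u v u' v' B B'. destruct (H1 u v u' v' B B') as [A1 A2]. destruct (H2 u v u' v' B B') as [A3 A4].
  destruct (H2 u' v' u v B' B) as [A5 _].
  pose proof (Rabs_pos (u - u')). pose proof (Rabs_pos (v - v')).
  pose proof (Rabs_pos (f u v)). pose proof (Rabs_pos (g u' v')).
  pose proof (Rabs_pos (f u v - f u' v')). pose proof (Rabs_pos (g u v - g u' v')).
  split.
  - rewrite Rabs_mult. pose proof (Rabs_pos (g u v)). apply Rmult_le_compat; auto.
  - replace (f u v * g u v - f u' v' * g u' v') with (f u v * (g u v - g u' v') + g u' v' * (f u v - f u' v')) by ring.
    eapply Rle_trans. apply Rabs_triang. rewrite !Rabs_mult.
    assert (Rabs (f u v) * Rabs (g u v - g u' v') <= M1 * (L2 * (Rabs (u - u') + Rabs (v - v')))) by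
      (apply Rmult_le_compat; auto).
    assert (Rabs (g u' v') * Rabs (f u v - f u' v') <= M2 * (L1 * (Rabs (u - u') + Rabs (v - v')))) by
      (apply Rmult_le_compat; auto).
    nra.
Qed.

Ltac solve_BL := repeat first [ apply BL_add | apply BL_sub | apply BL_mul | apply BL_opp
                               | apply BL_u | apply BL_v | apply BL_const ].

Lemma BL_F1 a b c d mu : BL (fun u v => F1 a b c d mu u v).
Proof. unfold F1. solve_BL. Qed.

Lemma BL_F2' theta : BL (fun u v => theta * u - (1 - u)).
Proof. solve_BL. Qed.

Definition G1 a b c d mu (x z : R) : R := F1 a b c d mu (cl x) (sgm z).
Definition G2 theta (x z : R) : R := theta * cl x - (1 - cl x).

Lemma G_bounds a b c d mu theta : exists M L, 0 < L /\
  (forall x z, Rabs (G1 a b c d mu x z) <= M /\ Rabs (G2 theta x z) <= M) /\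
  (forall x z x' z',
    Rabs (G1 a b c d mu x z - G1 a b c d mu x' z') <= L * (Rabs (x - x') + Rabs (z - z')) /\
    Rabs (G2 theta x z - G2 theta x' z') <= L * (Rabs (x - x') + Rabs (z - z'))).
Proof.
  destruct (BL_F1 a b c d mu) as [M1 [L1 [HM1 [HL1 H1]]]].
  destruct (BL_F2' theta) as [M2 [L2 [HM2 [HL2 H2]]]].
  exists (M1 + M2), (L1 + L2 + 1). split; [lra|]. split.
  - intros x z. assert (B : box (cl x) (sgm z)).
    { split. apply cl_range. pose proof (sgm_range z). lra. }
    destruct (H1 _ _ _ _ B B). destruct (H2 _ _ _ _ B B). unfold G1, G2. split; lra.
  - intros x z x' z'.
    assert (B : box (cl x) (sgm z)) by (split; [apply cl_range| pose proof (sgm_range z); lra]).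
    assert (B' : box (cl x') (sgm z')) by (split; [apply cl_range| pose proof (sgm_range z'); lra]).
    destruct (H1 _ _ _ _ B B') as [_ A1]. destruct (H2 _ _ _ _ B B') as [_ A2].
    pose proof (cl_lip x x'). pose proof (sgm_lip z z').
    pose proof (Rabs_pos (cl x - cl x')). pose proof (Rabs_pos (sgm z - sgm z')).
    pose proof (Rabs_pos (x - x')). pose proof (Rabs_pos (z - z')).
    unfold G1, G2. split.
    + eapply Rle_trans. apply A1. nra.
    + eapply Rle_trans. apply A2. nra.
Qed.


Lemma lip_cpt (h : R -> R) K x : (forall s t, Rabs (h s - h t) <= K * Rabs (s - t)) -> continuity_pt h x.
Proof. intros H. apply continuity_pt_filterlim. apply (lip_cont h x K). intros; apply H. Qed.

Lemma barrier (h dh : R -> R) (K : R) :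
  0 <= h 0 ->
  (forall s t, Rabs (h s - h t) <= K * Rabs (s - t)) ->
  (forall t, 0 < t -> is_derive h t (dh t)) ->
  (forall t, h t <= 0 -> 0 < dh t) ->
  forall t, 0 <= t -> 0 <= h t.
Proof.
  intros H0 Hl Hd Hp t1 Ht1.
  destruct (Rle_dec 0 (h t1)) as [|Hneg]; auto. exfalso.
  assert (Hn : h t1 < 0) by lra.
  assert (HK : 0 <= K).
  { specialize (Hl 1 0). replace (1 - 0) with 1 in Hl by ring. rewrite Rabs_R1 in Hl.
    pose proof (Rabs_pos (h 1 - h 0)). lra. }
  set (E := fun u => 0 <= u <= t1 /\ 0 <= h u).
  assert (Eb : bound E) by (exists t1; intros u [Hu _]; lra).
  assert (E0 : exists x, E x) by (exists 0; split; lra).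
  destruct (completeness E Eb E0) as [s [Hub Hlub]].
  assert (Hs1 : s <= t1) by (apply Hlub; intros u [Hu _]; lra).
  assert (Hs0 : 0 <= s) by (apply Hub; split; lra).
  assert (Hhs : 0 <= h s).
  { destruct (Rle_dec 0 (h s)) as [|Hc]; auto. exfalso.
    set (eta := - h s / (K + 1)).
    assert (Heta : 0 < eta) by (unfold eta; apply Rdiv_lt_0_compat; lra).
    destruct (classic (exists u, E u /\ s - eta < u)) as [[u [Eu Hu]] | Hno].
    - assert (us : u <= s) by (apply Hub; auto).
      assert (L1 := Hl u s). rewrite (Rabs_left1 (u - s)) in L1 by lra.
      destruct Eu as [_ Hu0].
      assert (K * - (u - s) <= K * eta) by (apply Rmult_le_compat_l; lra).
      assert (K * eta < - h s).
      { unfold eta. apply Rlt_le_trans with ((K + 1) * (- h s / (K + 1))).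
        apply Rmult_lt_compat_r. apply Rdiv_lt_0_compat; lra. lra. right; field; lra. }
      apply Rabs_le_between in L1. lra.
    - assert (s <= s - eta); [|lra].
      apply Hlub. intros u Eu. destruct (Rle_dec u (s - eta)); auto.
      exfalso; apply Hno; exists u; split; auto; lra. }
  assert (Hst : s < t1) by (destruct (Req_dec s t1); [subst; lra | lra]).
  assert (Hafter : forall u, s < u <= t1 -> h u < 0).
  { intros u Hu. destruct (Rlt_dec (h u) 0); auto. exfalso.
    assert (u <= s) by (apply Hub; split; lra). lra. }
  assert (Hs_le : h s <= 0).
  { destruct (Rle_dec (h s) 0) as [|Hc]; auto. exfalso.
    set (del := Rmin (t1 - s) (h s / (2 * (K + 1)))).
    assert (Hdel : 0 < del) by (unfold del; apply Rmin_pos; [lra | apply Rdiv_lt_0_compat; lra]).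
    assert (Hd1 : del <= t1 - s) by apply Rmin_l.
    assert (Hd2 : del <= h s / (2 * (K + 1))) by apply Rmin_r.
    assert (Hu := Hafter (s + del) ltac:(lra)).
    assert (L1 := Hl (s + del) s). replace (s + del - s) with del in L1 by ring.
    rewrite (Rabs_right del) in L1 by lra. apply Rabs_le_between in L1.
    assert (K * del <= K * (h s / (2 * (K + 1)))) by (apply Rmult_le_compat_l; lra).
    assert (K * (h s / (2 * (K + 1))) < h s).
    { assert (E1 : (K + 1) * (h s / (2 * (K + 1))) = h s / 2) by (field; lra).
      assert (0 < h s / (2 * (K + 1))) by (apply Rdiv_lt_0_compat; lra). nra. }
    lra. }
  assert (MV := MVT_gen h s t1 dh). cbv zeta in MV.
  rewrite Rmin_left, Rmax_right in MV by lra.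
  destruct MV as [c [Hc Heq]].
  - intros x Hx. apply Hd. lra.
  - intros x Hx. apply (lip_cpt h K). auto.
  - assert (h c <= 0).
    { destruct (Req_dec c s). subst; lra. left; apply Hafter; lra. }
    specialize (Hp c H). nra.
Qed.

Lemma core x x0 mu P Q :
  0 < x < 1 -> 0 < x0 < 1 -> x <= x0 -> 0 < mu <= 1 -> 0 < P -> 0 < Q ->
  x * (1 - x) * (P * x + Q * (1 - x)) = mu * (2 * x - 1) ->
  x0 * (1 - x0) * (P * x0 + Q * (1 - x0)) > 2 * x0 - 1 -> False.
Proof.
  intros Hx Hx0 Hle Hmu HP HQ Heq Hyp.
  assert (Hq : 0 < x * (1 - x)) by nra.
  assert (Hp : 0 < P * x + Q * (1 - x)) by nra.
  assert (H2 : 0 < 2 * x - 1).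
  { destruct (Rlt_dec 0 (2 * x - 1)) as [|Hn]; auto. exfalso.
    assert (0 < x * (1 - x) * (P * x + Q * (1 - x))) by (apply Rmult_lt_0_compat; auto). nra. }
  set (D := 2 * x0 - 1). assert (HD : 0 < D) by (unfold D; lra).
  assert (Id : D * (P * x + Q * (1 - x)) - (2 * x - 1) * (P * x0 + Q * (1 - x0)) = (P + Q) * (x0 - x))
    by (unfold D; ring).
  assert (Hq2 : x0 * (1 - x0) <= x * (1 - x)) by nra.
  assert (Hq0 : 0 < x0 * (1 - x0)) by nra.
  assert (Hp0 : 0 < P * x0 + Q * (1 - x0)) by nra.
  assert (S1 : D * (x * (1 - x) * (P * x + Q * (1 - x))) >= x0 * (1 - x0) * (D * (P * x + Q * (1 - x)))).
  { assert (0 < D * (P * x + Q * (1 - x))) by nra. nra. }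
  assert (S2 : D * (P * x + Q * (1 - x)) >= (2 * x - 1) * (P * x0 + Q * (1 - x0))) by nra.
  assert (S3 : x0 * (1 - x0) * (D * (P * x + Q * (1 - x))) >= (2 * x - 1) * (x0 * (1 - x0) * (P * x0 + Q * (1 - x0)))) by nra.
  assert (S4 : (2 * x - 1) * (x0 * (1 - x0) * (P * x0 + Q * (1 - x0))) > (2 * x - 1) * D) by (unfold D in *; nra).
  assert (S5 : D * (mu * (2 * x - 1)) <= D * (2 * x - 1)).
  { apply Rmult_le_compat_l; [lra|]. nra. }
  rewrite Heq in S1. lra.
Qed.

Lemma dist2_fst x1 r1 x2 r2 : Rabs (x1 - x2) <= dist2 x1 r1 x2 r2.
Proof.
  unfold dist2. rewrite <- sqrt_Rsqr_abs. apply sqrt_le_1_alt. unfold Rsqr. simpl.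
  pose proof (Rle_0_sqr (r1 - r2)). unfold Rsqr in H. nra.
Qed.

Lemma dist2_snd x1 r1 x2 r2 : Rabs (r1 - r2) <= dist2 x1 r1 x2 r2.
Proof.
  unfold dist2. rewrite <- sqrt_Rsqr_abs. apply sqrt_le_1_alt. unfold Rsqr. simpl.
  pose proof (Rle_0_sqr (x1 - x2)). unfold Rsqr in H. nra.
Qed.

Lemma dist2_vert x r1 r2 : dist2 x r1 x r2 = Rabs (r1 - r2).
Proof.
  unfold dist2. rewrite <- sqrt_Rsqr_abs. f_equal. unfold Rsqr. simpl. ring.
Qed.

Lemma is_derive_one_minus (f : R -> R) t l : is_derive f t l -> is_derive (fun s => 1 - f s) t (- l).
Proof.
  intros H. apply is_derive_Reals in H. apply is_derive_Reals.
  replace (- l) with (0 - l) by ring.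
  exact (derivable_pt_lim_minus (fct_cte 1) f t 0 l (derivable_pt_lim_const 1 t) H).
Qed.

Lemma build_sol a b c d mu theta xs z0 : 0 < mu -> 0 <= xs <= 1 ->
  exists X Z : R -> R, X 0 = xs /\ Z 0 = z0 /\
    is_forward_solution a b c d mu theta X (fun t => sgm (Z t)) /\
    (forall t, 0 <= t -> 0 <= X t <= 1) /\
    (forall t, 0 < t -> is_derive Z t (theta * X t - (1 - X t))) /\
    (forall x, continuity_pt Z x).
Proof.
  intros Hmu Hxs.
  destruct (G_bounds a b c d mu theta) as [M [L [HL [Hb Hl]]]].
  destruct (ode_exists (G1 a b c d mu) (G2 theta) M L xs z0 HL Hb Hl) as [X [Z [HX0 [HZ0 [Hlip Hder]]]]].
  assert (HM : 0 <= M) by (destruct (Hb 0 0); pose proof (Rabs_pos (G1 a b c d mu 0 0)); lra).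
  assert (F10 : forall r, F1 a b c d mu 0 r = mu) by (intros; unfold F1; ring).
  assert (F11 : forall r, F1 a b c d mu 1 r = - mu) by (intros; unfold F1; ring).
  assert (Lo : forall t, 0 <= t -> 0 <= X t).
  { apply (barrier X (fun t => G1 a b c d mu (X t) (Z t)) M).
    - lra.
    - intros; apply Hlip.
    - intros t Ht. apply is_derive_Reals. apply Hder; auto.
    - intros t Ht. unfold G1. rewrite cl_le0 by auto. rewrite F10. auto. }
  assert (Hi : forall t, 0 <= t -> 0 <= 1 - X t).
  { apply (barrier (fun t => 1 - X t) (fun t => - G1 a b c d mu (X t) (Z t)) M).
    - lra.
    - intros s t. replace (1 - X s - (1 - X t)) with (- (X s - X t)) by ring. rewrite Rabs_Ropp. apply Hlip.
    - intros t Ht. apply is_derive_one_minus. apply is_derive_Reals. apply Hder; auto.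
    - intros t Ht. unfold G1. rewrite cl_ge1 by lra. rewrite F11. lra. }
  assert (Inv : forall t, 0 <= t -> 0 <= X t <= 1) by (intros t Ht; split; [apply Lo | pose proof (Hi t Ht)]; lra).
  exists X, Z. split; [auto|]. split; [auto|]. split; [|split; [auto|split]].
  - split.
    + intros t Ht. destruct (Hder t Ht) as [D1 D2]. assert (It := Inv t ltac:(lra)). split.
      * unfold G1 in D1. rewrite cl_id in D1 by auto. exact D1.
      * assert (D3 := derivable_pt_lim_comp Z sgm t _ _ D2 (sgm_deriv (Z t))).
        unfold comp in D3.
        replace (F2 theta (X t) (sgm (Z t))) with (sgm (Z t) * (1 - sgm (Z t)) * G2 theta (X t) (Z t)).
        exact D3. unfold F2, G2. rewrite cl_id by auto. ring.
    + intros e He. exists (e / (M + 1)). split. apply Rdiv_lt_0_compat; lra.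
      intros t [Ht0 Ht1].
      destruct (Hlip t 0) as [A1 A2]. rewrite Rminus_0_r, (Rabs_right t) in A1, A2 by lra.
      assert (M * t < e).
      { apply Rle_lt_trans with (M * (e / (M + 1))). apply Rmult_le_compat_l; lra.
        apply Rlt_le_trans with ((M + 1) * (e / (M + 1))).
        apply Rmult_lt_compat_r. apply Rdiv_lt_0_compat; lra. lra. right; field; lra. }
      pose proof (sgm_lip (Z t) (Z 0)). split; lra.
  - intros t Ht. destruct (Hder t Ht) as [_ D2]. apply is_derive_Reals.
    unfold G2 in D2. rewrite cl_id in D2 by (apply Inv; lra). exact D2.
  - intros x. apply (lip_cpt Z M). intros; apply Hlip.
Qed.

Lemma escape0 a b c d mu theta xs :
  0 < mu -> 0 < theta -> 0 < xs < 1 -> 0 < theta * xs - (1 - xs) ->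
  unstable a b c d mu theta xs 0.
Proof.
  intros Hmu Hth Hxs Hlam Hst.
  set (lam := theta * xs - (1 - xs)) in *.
  set (eps := Rmin (1/2) (lam / (2 * (theta + 1)))).
  assert (Heps : 0 < eps) by (unfold eps; apply Rmin_pos; [lra | apply Rdiv_lt_0_compat; lra]).
  assert (E1 : eps <= 1/2) by apply Rmin_l.
  assert (E2 : eps <= lam / (2 * (theta + 1))) by apply Rmin_r.
  destruct (Hst eps Heps) as [del [Hdel P]].
  set (z0 := ln (del / 2)).
  destruct (build_sol a b c d mu theta xs z0 Hmu ltac:(lra)) as [X [Z [HX0 [HZ0 [Sol [Inv [Dz Cz]]]]]]].
  assert (Init : dist2 (X 0) (sgm (Z 0)) xs 0 < del).
  { rewrite HX0, dist2_vert, Rminus_0_r, HZ0. pose proof (sgm_range z0).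
    rewrite Rabs_right by lra. pose proof (sgm_le_exp z0) as Hle.
    assert (exp z0 = del / 2) by (unfold z0; apply exp_ln; lra). lra. }
  assert (Sq : in_square (X 0) (sgm (Z 0))).
  { rewrite HX0. pose proof (sgm_range (Z 0)). split; lra. }
  specialize (P X (fun t => sgm (Z t)) Sol Sq Init).
  assert (Gc : forall t, 0 <= t -> lam / 2 <= theta * X t - (1 - X t)).
  { intros t Ht. specialize (P t Ht). pose proof (dist2_fst (X t) (sgm (Z t)) xs 0).
    assert (Hx : Rabs (X t - xs) < eps) by lra. apply Rabs_lt_between in Hx.
    assert ((theta + 1) * eps <= lam / 2).
    { apply Rle_trans with ((theta + 1) * (lam / (2 * (theta + 1)))).
      apply Rmult_le_compat_l; lra. right; field; lra. }
    unfold lam in *. nra. }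
  set (T := 2 * (Rabs z0 + 1) / lam).
  assert (HT : 0 < T) by (unfold T; apply Rdiv_lt_0_compat; [pose proof (Rabs_pos z0); lra | lra]).
  assert (MV := MVT_gen Z 0 T (fun u => theta * X u - (1 - X u))). cbv zeta in MV.
  rewrite Rmin_left, Rmax_right in MV by lra.
  destruct MV as [cc [Hc Heq]].
  - intros x Hx. apply Dz. lra.
  - intros x Hx. apply Cz.
  - assert (G := Gc cc ltac:(lra)).
    assert (Q1 : lam / 2 * T = Rabs z0 + 1) by (unfold T; field; lra).
    assert (Q2 : Z T - Z 0 >= lam / 2 * T) by (rewrite Heq, Rminus_0_r; apply Rle_ge; apply Rmult_le_compat_r; lra).
    pose proof (Rle_abs (- z0)) as Q3. rewrite Rabs_Ropp in Q3.
    assert (Q4 : 0 <= Z T) by lra.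
    pose proof (sgm_ge_half _ Q4) as Q5.
    specialize (P T ltac:(lra)). pose proof (dist2_snd (X T) (sgm (Z T)) xs 0) as Q6.
    rewrite Rminus_0_r in Q6. pose proof (Rle_abs (sgm (Z T))). lra.
Qed.

Lemma escape1 a b c d mu theta xs :
  0 < mu -> 0 < theta -> 0 < xs < 1 -> theta * xs - (1 - xs) < 0 ->
  unstable a b c d mu theta xs 1.
Proof.
  intros Hmu Hth Hxs Hlam0 Hst.
  set (lam := (1 - xs) - theta * xs).
  assert (Hlam : 0 < lam) by (unfold lam; lra).
  set (eps := Rmin (1/2) (lam / (2 * (theta + 1)))).
  assert (Heps : 0 < eps) by (unfold eps; apply Rmin_pos; [lra | apply Rdiv_lt_0_compat; lra]).
  assert (E1 : eps <= 1/2) by apply Rmin_l.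
  assert (E2 : eps <= lam / (2 * (theta + 1))) by apply Rmin_r.
  destruct (Hst eps Heps) as [del [Hdel P]].
  set (z0 := - ln (del / 2)).
  destruct (build_sol a b c d mu theta xs z0 Hmu ltac:(lra)) as [X [Z [HX0 [HZ0 [Sol [Inv [Dz Cz]]]]]]].
  assert (Init : dist2 (X 0) (sgm (Z 0)) xs 1 < del).
  { rewrite HX0, dist2_vert, HZ0. pose proof (sgm_range z0).
    rewrite Rabs_left by lra. pose proof (one_sgm_le_exp z0) as Hle.
    assert (exp (- z0) = del / 2) by (unfold z0; rewrite Ropp_involutive; apply exp_ln; lra). lra. }
  assert (Sq : in_square (X 0) (sgm (Z 0))).
  { rewrite HX0. pose proof (sgm_range (Z 0)). split; lra. }
  specialize (P X (fun t => sgm (Z t)) Sol Sq Init).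
  assert (Gc : forall t, 0 <= t -> theta * X t - (1 - X t) <= - (lam / 2)).
  { intros t Ht. specialize (P t Ht). pose proof (dist2_fst (X t) (sgm (Z t)) xs 1).
    assert (Hx : Rabs (X t - xs) < eps) by lra. apply Rabs_lt_between in Hx.
    assert ((theta + 1) * eps <= lam / 2).
    { apply Rle_trans with ((theta + 1) * (lam / (2 * (theta + 1)))).
      apply Rmult_le_compat_l; lra. right; field; lra. }
    unfold lam in *. nra. }
  set (T := 2 * (Rabs z0 + 1) / lam).
  assert (HT : 0 < T) by (unfold T; apply Rdiv_lt_0_compat; [pose proof (Rabs_pos z0); lra | lra]).
  assert (MV := MVT_gen Z 0 T (fun u => theta * X u - (1 - X u))). cbv zeta in MV.
  rewrite Rmin_left, Rmax_right in MV by lra.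
  destruct MV as [cc [Hc Heq]].
  - intros x Hx. apply Dz. lra.
  - intros x Hx. apply Cz.
  - assert (G := Gc cc ltac:(lra)).
    assert (Q1 : lam / 2 * T = Rabs z0 + 1) by (unfold T; field; lra).
    assert (Q2 : Z T - Z 0 <= - (lam / 2) * T) by (rewrite Heq, Rminus_0_r; apply Rmult_le_compat_r; lra).
    pose proof (Rle_abs z0) as Q3.
    assert (Q4 : Z T <= 0) by lra.
    pose proof (sgm_le_half _ Q4) as Q5.
    specialize (P T ltac:(lra)). pose proof (dist2_snd (X T) (sgm (Z T)) xs 1) as Q6.
    pose proof (sgm_range (Z T)). rewrite Rabs_left in Q6 by lra. lra.
Qed.

Theorem lemma12 (a b c d theta : R) :
  0 < a -> 0 < b -> 0 < c -> 0 < d -> 0 < theta ->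
  - (theta * a + theta ^ 2 * b) < (theta - 1) * (theta + 1) ^ 2 ->
  (theta - 1) * (theta + 1) ^ 2 < theta * c + theta ^ 2 * d ->
  forall mu : R, 0 < mu <= 1 ->
  forall x r : R,
    on_boundary x r ->
    is_equilibrium a b c d mu theta x r ->
    unstable a b c d mu theta x r.
Proof.
  intros Ha Hb Hc Hd Hth H1 H2 mu [Hmu0 Hmu1] x r [[Hx Hr] Hbd] [E1 E2].
  assert (F10 : forall r, F1 a b c d mu 0 r = mu) by (intros; unfold F1; ring).
  assert (F11 : forall r, F1 a b c d mu 1 r = - mu) by (intros; unfold F1; ring).
  assert (Hx01 : 0 < x < 1).
  { destruct (Req_dec x 0) as [->|n0]. rewrite F10 in E1. lra.
    destruct (Req_dec x 1) as [->|n1]. rewrite F11 in E1. lra. lra. }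
  assert (Htp : 0 < theta + 1) by lra.
  destruct Hbd as [-> | [-> | [-> | ->]]]; try lra.
  - apply escape0; auto.
    destruct (Rlt_dec 0 (theta * x - (1 - x))) as [|Hn]; auto. exfalso.
    set (x0 := / (theta + 1)).
    assert (Hx0 : x0 * (theta + 1) = 1) by (unfold x0; field; lra).
    assert (Hx0p : 0 < x0) by (unfold x0; apply Rinv_0_lt_compat; lra).
    assert (A1 : 0 < x0 < 1) by (split; auto; nra).
    assert (A2 : x <= x0) by nra.
    assert (A3 : x * (1 - x) * (a * x + b * (1 - x)) = mu * (2 * x - 1)).
    { assert (x * (1 - x) * (a * x + b * (1 - x)) - mu * (2 * x - 1) = F1 a b c d mu x 0) by (unfold F1; ring). lra. }
    assert (A4 : x0 * (1 - x0) * (a * x0 + b * (1 - x0)) > 2 * x0 - 1).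
    { assert (Id : x0 * (1 - x0) * (a * x0 + b * (1 - x0)) - (2 * x0 - 1) =
                   (theta * a + theta ^ 2 * b + (theta - 1) * (theta + 1) ^ 2) * x0 ^ 3)
        by (unfold x0; field; lra).
      assert (0 < (theta * a + theta ^ 2 * b + (theta - 1) * (theta + 1) ^ 2) * x0 ^ 3).
      { apply Rmult_lt_0_compat. lra. apply pow_lt. auto. }
      lra. }
    exact (core x x0 mu a b Hx01 A1 A2 (conj Hmu0 Hmu1) Ha Hb A3 A4).
  - apply escape1; auto.
    destruct (Rlt_dec (theta * x - (1 - x)) 0) as [|Hn]; auto. exfalso.
    set (y0 := theta / (theta + 1)).
    assert (Hy0 : y0 * (theta + 1) = theta) by (unfold y0; field; lra).
    assert (Hy0p : 0 < y0) by (unfold y0; apply Rdiv_lt_0_compat; lra).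
    assert (A0 : 0 < 1 - x < 1) by lra.
    assert (A1 : 0 < y0 < 1) by (split; auto; nra).
    assert (A2 : 1 - x <= y0) by nra.
    assert (A3 : (1 - x) * (1 - (1 - x)) * (d * (1 - x) + c * (1 - (1 - x))) = mu * (2 * (1 - x) - 1)).
    { assert ((1 - x) * (1 - (1 - x)) * (d * (1 - x) + c * (1 - (1 - x))) - mu * (2 * (1 - x) - 1) = - F1 a b c d mu x 1) by (unfold F1; ring). lra. }
    assert (A4 : y0 * (1 - y0) * (d * y0 + c * (1 - y0)) > 2 * y0 - 1).
    { assert (Id : y0 * (1 - y0) * (d * y0 + c * (1 - y0)) - (2 * y0 - 1) =
                   (theta * c + theta ^ 2 * d - (theta - 1) * (theta + 1) ^ 2) * (/ (theta + 1)) ^ 3)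
        by (unfold y0; field; lra).
      assert (0 < (theta * c + theta ^ 2 * d - (theta - 1) * (theta + 1) ^ 2) * (/ (theta + 1)) ^ 3).
      { apply Rmult_lt_0_compat. lra. apply pow_lt. apply Rinv_0_lt_compat; lra. }
      lra. }
    exact (core (1 - x) y0 mu d c A0 A1 A2 (conj Hmu0 Hmu1) Hd Hc A3 A4).
Qed.
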